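(* Let $\mathbb{T}$ be a time scale, $t_0\in\mathbb{T}$, $b,c:\mathbb{T}\to[0,\infty)$, $x_0>0$, $y_0>0$, $z_0\ge0$, and let $(x,y,z)$ be a solution of $$x^{\Delta}=-\frac{b(t)\,x\,y^{\sigma}}{x+y},\qquad y^{\Delta}=\frac{b(t)\,x\,y^{\sigma}}{x+y}-c(t)\,y^{\sigma},\qquad z^{\Delta}=c(t)\,y^{\sigma},$$ with $x,y:\mathbb{T}\to(0,\infty)$, $z:\mathbb{T}\to[0,\infty)$, $x(t_0)=x_0$, $y(t_0)=y_0$, $z(t_0)=z_0$. If $c(t)\ge b(t)$ for all $t\in\mathbb{T}$, or $\frac{x_0}{x_0+y_0}b(t)\le c(t)\le b(t)$ for all $t\in\mathbb{T}$, then $y$ is decreasing, i.e. $y^{\Delta}(t)\le0$ for all $t$. If $\frac{x_0}{x_0+y_0}b(t_0)\ge c(t_0)$, then $y^{\Delta}(t_0)\ge0$.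
   Context: A time scale $\mathbb{T}$ is a nonempty closed subset of $\mathbb{R}$. $\sigma(t)=\inf\{s\in\mathbb{T}:s>t\}$, $f^{\sigma}=f\circ\sigma$. $f^{\Delta}$ is the delta (Hilger) derivative: for every $\varepsilon>0$ there is $\delta>0$ with $|f(\sigma(t))-f(s)-f^{\Delta}(t)(\sigma(t)-s)|\le\varepsilon|\sigma(t)-s|$ for $s\in(t-\delta,t+\delta)\cap\mathbb{T}$. *)

(* Defs.v *)
From HB Require Import structures.
From mathcomp Require Import all_boot all_order all_algebra.
From mathcomp Require Import all_classical all_reals all_analysis.
Set Implicit Arguments. Unset Strict Implicit. Unset Printing Implicit Defensive.
Import Order.TTheory GRing.Theory Num.Theory.
Import numFieldNormedType.Exports.
Local Open Scope classical_set_scope.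
Local Open Scope ring_scope.

Definition time_scale {R : realType} (T : set R) : Prop :=
  closed T /\ T !=set0.

(* forward jump operator sigma(t) = inf {s in T | s > t}, with the
   standard convention inf(emptyset) = sup T, i.e. sigma(max T) = max T *)
Definition sigma {R : realType} (T : set R) (t : R) : R :=
  if pselect (exists s, T s /\ t < s) then inf [set s | T s /\ t < s] else t.

Definition delta_deriv {R : realType} (T : set R) (f : R -> R) (t l : R) : Prop :=
  forall eps : R, 0 < eps -> exists delta : R, 0 < delta /\
    forall s, T s -> `|t - s| < delta ->
      `|f (sigma T t) - f s - l * (sigma T t - s)| <= eps * `|sigma T t - s|.

(* Main.v *)
Require Import Defs.
From HB Require Import structures.
From mathcomp Require Import all_boot all_order all_algebra.
From mathcomp Require Import all_classical all_reals all_analysis.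
From mathcomp Require Import ring lra.
Import Order.TTheory GRing.Theory Num.Theory.
Import numFieldNormedType.Exports.
Local Open Scope classical_set_scope.
Local Open Scope ring_scope.
Set Implicit Arguments. Unset Strict Implicit.

Section H.
Variable R : realType.
Implicit Types U : set R.

Lemma closed_approx U m : closed U ->
  (forall e : R, 0 < e -> exists a, U a /\ `|m - a| < e) -> U m.
Proof.
move=> hU H; apply: hU => B /nbhs_ballP [e e0 sub].
have [a [Ua ma]] := H e e0; exists a; split => //; apply: sub.
by rewrite /ball /=.
Qed.
Lemma sig_ge U t : t <= sigma U t.
Proof.
rewrite /sigma; case: pselect => [[s [Us ts]]|//].
apply: lb_le_inf; first by exists s.
by move=> r [_ tr]; exact: ltW.
Qed.

Lemma sig_gap U t s : U s -> t < s -> sigma U t <= s.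
Proof.
move=> Us ts; rewrite /sigma; case: pselect => [hh|nE]; last by exfalso; apply: nE; exists s.
apply: ge_inf; last by [].
by exists t => r [_ tr]; exact: ltW.
Qed.

Lemma sig_in U t : closed U -> U t -> U (sigma U t).
Proof.
move=> hU Ut; rewrite /sigma; case: pselect => [[s [Us ts]]|//].
apply: closed_approx => // e e0.
have hi : has_inf [set s | U s /\ t < s].
  by split; [exists s | exists t => r [_ tr]; exact: ltW].
have [a [Ua ta] ae] := inf_adherent e0 hi.
exists a; split => //.
have := ge_inf hi.2 (conj Ua ta) => ia.
rewrite ler0_norm ?subr_le0 //; lra.
Qed.

Lemma sig_dense U t s : U s -> t < s -> sigma U t = t ->
  forall e : R, 0 < e -> exists u, U u /\ t < u /\ u < t + e.
Proof.
move=> Us ts; rewrite /sigma; case: pselect => [hh|nE]; last by exfalso; apply: nE; exists s.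
rewrite /= => hinf e e0.
have hi : has_inf [set s | U s /\ t < s].
  by split; [exists s | exists t => r [_ tr]; exact: ltW].
have [a [Ua ta] ae] := inf_adherent e0 hi.
exists a; split => //; split => //.
by move: ae; rewrite hinf.
Qed.
Lemma dd_jump U f t l : delta_deriv U f t l -> U t ->
  f (sigma U t) - f t = l * (sigma U t - t).
Proof.
move=> H Ut; apply/eqP; rewrite -subr_eq0 -normr_le0.
apply/ler_addgt0Pr => e e0; rewrite add0r.
set mu := `|sigma U t - t|.
have mu0 : 0 <= mu by exact: normr_ge0.
have ee : 0 < e / (mu + 1) by rewrite divr_gt0 // ltr_wpDl.
have [d [d0 Hd]] := H _ ee.
have := Hd t Ut; rewrite subrr normr0 => /(_ d0) Ht.
apply: le_trans Ht _.
rewrite -/mu mulrAC ler_pdivrMr ?ltr_wpDl //; nra.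
Qed.

Lemma dd_cont U f t l : delta_deriv U f t l -> U t ->
  forall g : R, 0 < g -> exists d : R, 0 < d /\
    forall a, U a -> `|t - a| < d -> `|f t - f a| <= g.
Proof.
move=> H Ut g g0.
have J := dd_jump H Ut.
set s := sigma U t in J *.
set mu := `|s - t|.
have mu0 : 0 <= mu by exact: normr_ge0.
set eps := g / (2 * (mu + 1)).
have eps0 : 0 < eps by rewrite divr_gt0 // mulr_gt0 // ltr_wpDl.
have [d1 [d10 Hd]] := H _ eps0.
set c := g / (2 * (`|l| + 1)).
have c0 : 0 < c by rewrite divr_gt0 // mulr_gt0 // ltr_wpDl.
exists (Num.min d1 (Num.min 1 c)); split.
  by rewrite lt_min d10 /= lt_min ltr01 c0.
move=> a Ua; rewrite !lt_min => /andP[ad1 /andP[a1 ac]].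
have Ha := Hd a Ua ad1.
have E : f t - f a = (f s - f a - l * (s - a)) + l * (t - a).
  have -> : f s = f t + l * (s - t) by rewrite -J; ring.
  ring.
rewrite E; apply: le_trans (ler_normD _ _) _; rewrite normrM.
have A : `|s - a| <= mu + 1.
  have -> : s - a = (s - t) + (t - a) by ring.
  apply: le_trans (ler_normD _ _) _; rewrite -/mu; lra.
have B1 : eps * `|s - a| <= g / 2.
  apply: le_trans (ler_wpM2l (ltW eps0) A) _.
  rewrite /eps; rewrite le_eqVlt; apply/orP; left; apply/eqP; field; lra.
have B2 : `|l| * `|t - a| <= g / 2.
  apply: le_trans (ler_wpM2l (normr_ge0 l) (ltW ac)) _.
  rewrite /c mulrA ler_pdivrMr; last by rewrite mulr_gt0 // ltr_wpDl.
  have l0 : 0 <= `|l| by exact: normr_ge0.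
  nra.
lra.
Qed.

Lemma dd_dense U f t l : delta_deriv U f t l -> sigma U t = t ->
  forall eps : R, 0 < eps -> exists d : R, 0 < d /\
    forall a, U a -> `|t - a| < d ->
      `|f t - f a - l * (t - a)| <= eps * `|t - a|.
Proof.
move=> H st eps e0; have [d [d0 Hd]] := H eps e0; exists d; split => // a Ua ta.
by have := Hd a Ua ta; rewrite st.
Qed.
End H.
Section I.
Variable R : realType.

Lemma invariant_eps (U : set R) t0 (x y xD yD : R -> R) (k eps : R) :
  closed U -> U t0 -> (forall t, U t -> t0 <= t) ->
  (forall t, U t -> 0 < x t /\ 0 < y t) ->
  (forall t, U t -> delta_deriv U x t (xD t)) ->
  (forall t, U t -> delta_deriv U y t (yD t)) ->
  (forall t, U t -> 0 <= yD t * x t - xD t * y t) ->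
  k * x t0 <= y t0 -> 0 < eps ->
  forall t1, U t1 -> (k - eps * (t1 - t0)) * x t1 <= y t1.
Proof.
move=> hU Ut0 ge0 pos dx dy key P0' e0 t1 Ut1; apply: contrapT => nP1.
pose P t := (k - eps * (t - t0)) * x t <= y t.
have P0 : P t0 by rewrite /P subrr mulr0 subr0.
pose A := [set t | U t /\ t <= t1 /\ forall s, U s -> s <= t -> P s].
have At0 : A t0.
  split => //; split; first exact: ge0.
  move=> s Us st0; have := ge0 s Us => h.
  by have -> : s = t0 by apply/le_anti; rewrite st0 h.
have hs : has_sup A.
  by split; [exists t0 | exists t1 => r [_ [rt1 _]]].
set m := sup A.
have mub : ubound A m := sup_upper_bound hs.
have mt1 : m <= t1.
  by apply: ge_sup; [exists t0 | move=> r [_ [h _]]].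
have Um : U m.
  apply: closed_approx => // e e0'.
  have [a Aa ae] := sup_adherent e0' hs.
  exists a; split; first by case: Aa.
  have := mub a Aa => am; rewrite -/m in ae; rewrite ger0_norm ?subr_ge0 //; lra.
have H1 : forall s, U s -> s < m -> P s.
  move=> s Us sm; have sm' : 0 < m - s by rewrite subr_gt0.
  have [a [Ua [at1 Ha]] ae] := sup_adherent sm' hs.
  apply: Ha Us _; rewrite -/m in ae; lra.
have [xm ym] := pos m Um.
have Pm : P m.
  rewrite /P; apply/ler_addgt0Pr => g g0.
  set qm := k - eps * (m - t0).
  have gx0 : 0 < g / (2 * (`|qm| + 1)).
    by rewrite divr_gt0 // mulr_gt0 // ltr_wpDl.
  have g20 : 0 < g / 2 by rewrite divr_gt0.
  have [dxx [dxx0 Hx]] := dd_cont (dx m Um) Um gx0.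
  have [dyy [dyy0 Hy]] := dd_cont (dy m Um) Um g20.
  have d0 : 0 < Num.min dxx dyy by rewrite lt_min dxx0 dyy0.
  have [a Aa ae] := sup_adherent d0 hs.
  have am := mub a Aa; case: Aa => Ua [_ Ha]; have Pa := Ha a Ua (lexx a).
  have dam : `|m - a| < Num.min dxx dyy.
    rewrite ger0_norm ?subr_ge0 //; rewrite -/m in ae; lra.
  move: dam; rewrite lt_min => /andP[da1 da2].
  have hx := Hx a Ua da1; have hy := Hy a Ua da2.
  have [xa ya] := pos a Ua.
  have c1 : qm * (x m - x a) <= `|qm| * (g / (2 * (`|qm| + 1))).
    apply: le_trans (ler_norm _) _; rewrite normrM.
    by apply: ler_wpM2l.
  have c2 : `|qm| * (g / (2 * (`|qm| + 1))) <= g / 2.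
    rewrite mulrA ler_pdivrMr; last by rewrite mulr_gt0 // ltr_wpDl.
    have l0 : 0 <= `|qm| by exact: normr_ge0.
    nra.
  move: hy; rewrite ler_norml => /andP[hy1 hy2].
  have c3 : 0 <= eps * (m - a) * x a.
    by rewrite mulr_ge0 // ?mulr_ge0 ?subr_ge0 // ltW.
  rewrite /P in Pa; rewrite /qm in c1 *.
  lra.
have Am : A m.
  split => //; split => // s Us; rewrite le_eqVlt => /orP[/eqP -> //|].
  exact: H1.
have mlt : m < t1.
  rewrite lt_neqAle mt1 andbT; apply/eqP => e; apply: nP1.
  by rewrite -e.
have sg := sig_ge U m.
rewrite le_eqVlt in sg; case/orP: sg => [/eqP sm | sm].
-
  have sm' : sigma U m = m by rewrite -sm.
  have Km := key m Um.
  pose eta := Num.min 1 (eps * x m ^+ 2 / (2 * (x m + y m))).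
  have eta0 : 0 < eta.
    by rewrite lt_min ltr01 /= divr_gt0 // ?mulr_gt0 ?exprn_gt0 // addr_gt0.
  have eta1 : eta <= 1 by rewrite ge_min lexx.
  have eta2 : eta * (2 * (x m + y m)) <= eps * x m ^+ 2.
    rewrite -ler_pdivlMr ?mulr_gt0 ?addr_gt0 //.
    by rewrite ge_min lexx orbT.
  have [d1 [d10 Hx]] := dd_dense (dx m Um) sm' eta0.
  have [d2 [d20 Hy]] := dd_dense (dy m Um) sm' eta0.
  pose d3 := x m / (2 * (`|xD m| + 1)).
  have d30 : 0 < d3 by rewrite divr_gt0 // mulr_gt0 // ltr_wpDl.
  have tm0 : 0 < t1 - m by rewrite subr_gt0.
  pose d := Num.min d1 (Num.min d2 (Num.min d3 (t1 - m))).
  have d0 : 0 < d by rewrite !lt_min d10 d20 d30 tm0.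
  have step : forall r, U r -> m < r -> r < m + d -> P r.
    move=> r Ur mr rd.
    have hd : r - m < d by lra.
    move: hd; rewrite !lt_min => /and4P[h1 h2 h3 h4].
    have dd0 : 0 < r - m by rewrite subr_gt0.
    have nr : `|m - r| = r - m by rewrite distrC ger0_norm // ltW.
    have hx := Hx r Ur; rewrite nr in hx; have {hx}hx := hx h1.
    have hy := Hy r Ur; rewrite nr in hy; have {hy}hy := hy h2.
    move: hx; rewrite ler_norml => /andP[hx1 hx2].
    move: hy; rewrite ler_norml => /andP[hy1 hy2].
    have [xr yr] := pos r Ur.
    have a1 : (- xD m) * (r - m) <= `|xD m| * (r - m).
      by apply: ler_wpM2r; [exact: ltW | rewrite -normrN; exact: ler_norm].
    have a2 : (`|xD m| + 1) * (r - m) <= x m / 2.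
      have : (`|xD m| + 1) * (r - m) <= (`|xD m| + 1) * d3.
        by apply: ler_wpM2l; [rewrite addr_ge0 | exact: ltW].
      suff -> : (`|xD m| + 1) * d3 = x m / 2 by [].
      rewrite /d3; field.
      have : 0 < `|xD m| + 1 by rewrite ltr_wpDl.
      lra.
    have a3 : eta * (r - m) <= r - m.
      by have := ler_wpM2r (ltW dd0) eta1; rewrite mul1r.
    have Xlow : x m / 2 <= x r by lra.
    have b1 : x m * (y m - y r - yD m * (m - r)) <= x m * (eta * (r - m)).
      by apply: ler_wpM2l; [exact: ltW|].
    have b2 : y m * (- (eta * (r - m))) <= y m * (x m - x r - xD m * (m - r)).
      by apply: ler_wpM2l; [exact: ltW|].
    have b3 : 0 <= (r - m) * (yD m * x m - xD m * y m) by rewrite mulr_ge0 // ltW.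
    have K1 : - (eta * (r - m) * (x m + y m)) <= x m * y r - y m * x r by lra.
    have b4 : eps * x m * (x m / 2) <= eps * x m * x r.
      by apply: ler_wpM2l => //; rewrite mulr_ge0 // ltW.
    have b5 : eta * (x m + y m) <= eps * x m * x r.
      have : eta * (x m + y m) <= eps * x m * (x m / 2).
        have h := eta2; rewrite expr2 in h; lra.
      lra.
    have K2 : eta * (x m + y m) * (r - m) <= eps * x m * x r * (r - m).
      by apply: ler_wpM2r => //; exact: ltW.
    have K3 : (k - eps * (m - t0)) * x m * x r <= y m * x r.
      by rewrite ler_wpM2r // ltW.
    have K4 : 0 <= x m * (y r - (k - eps * (r - t0)) * x r) by lra.
    rewrite pmulr_rge0 // in K4; rewrite /P; lra.
  have [u [Uu [mu ud]]] := sig_dense Ut1 mlt sm' d0.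
  have Au : A u.
    have : d <= t1 - m by rewrite /d !ge_min lexx !orbT.
    move=> dt; split => //; split; first by lra.
    move=> r Ur; case: (lerP r m) => [rm _|mr ru].
    + by case: Am => _ [_]; apply.
    + by apply: step => //; lra.
  have := mub u Au; rewrite -/m; lra.
-
  set s := sigma U m in sm *.
  have Us : U s by exact: sig_in.
  have st1 : s <= t1 by exact: sig_gap.
  have Ps : P s.
    have Jx := dd_jump (dx m Um) Um; have Jy := dd_jump (dy m Um) Um.
    rewrite -/s in Jx Jy.
    have [xs ys] := pos s Us.
    have Km := key m Um.
    have e1 : x m * y s - y m * x s = (s - m) * (yD m * x m - xD m * y m).
      have -> : x s = x m + xD m * (s - m) by rewrite -Jx; ring.
      have -> : y s = y m + yD m * (s - m) by rewrite -Jy; ring.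
      ring.
    have e2 : 0 <= (s - m) * (yD m * x m - xD m * y m).
      by rewrite mulr_ge0 // subr_ge0 ltW.
    have e3 : (k - eps * (m - t0)) * x m * x s <= y m * x s.
      by rewrite ler_wpM2r // ltW.
    have e4 : 0 <= x m * (y s - (k - eps * (m - t0)) * x s) by lra.
    rewrite pmulr_rge0 // in e4.
    have e5 : 0 <= eps * (s - m) * x s.
      by rewrite mulr_ge0 // ?mulr_ge0 ?subr_ge0 ?ltW.
    rewrite /P; lra.
  have As : A s.
    split => //; split => // r Ur; case: (lerP r m) => [rm _|mr rs].
    + by case: Am => _ [_]; apply.
    + have := sig_gap Ur mr; rewrite -/s => sr.
      by have -> : r = s by apply/le_anti; rewrite sr rs.
  have := mub s As; rewrite -/m; lra.
Qed.
End I.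
Section F.
Variable R : realType.

Lemma invariant (U : set R) t0 (x y xD yD : R -> R) (k : R) :
  closed U -> U t0 -> (forall t, U t -> t0 <= t) ->
  (forall t, U t -> 0 < x t /\ 0 < y t) ->
  (forall t, U t -> delta_deriv U x t (xD t)) ->
  (forall t, U t -> delta_deriv U y t (yD t)) ->
  (forall t, U t -> 0 <= yD t * x t - xD t * y t) ->
  k * x t0 <= y t0 ->
  forall t, U t -> k * x t <= y t.
Proof.
move=> hU Ut0 ge0 pos dx dy key P0 t Ut.
have [xt yt] := pos t Ut; have tt0 := ge0 t Ut.
apply/ler_addgt0Pr => e e0.
pose w := e / ((t - t0 + 1) * x t).
have tpos : 0 < (t - t0 + 1) * x t by rewrite mulr_gt0 //; lra.
have w0 : 0 < w by rewrite divr_gt0.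
have hw : w * ((t - t0 + 1) * x t) = e.
  by rewrite /w divfK // lt0r_neq0.
have := invariant_eps hU Ut0 ge0 pos dx dy key P0 w0 Ut => h.
have : 0 < w * x t by rewrite mulr_gt0.
nra.
Qed.
End F.

Unset Implicit Arguments.

Theorem theorem28 (R : realType) (T : set R) (t0 : R) (b c : R -> R)
  (x0 y0 z0 : R) (x y z xD yD zD : R -> R) :
  time_scale T -> T t0 ->
  (forall t, T t -> 0 <= b t) -> (forall t, T t -> 0 <= c t) ->
  0 < x0 -> 0 < y0 -> 0 <= z0 ->
  (* the solution lives on T_{t0} = T ∩ [t0, +oo) *)
  (forall t, T t -> t0 <= t -> 0 < x t /\ 0 < y t /\ 0 <= z t) ->
  x t0 = x0 -> y t0 = y0 -> z t0 = z0 ->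
  (forall t, T t -> t0 <= t ->
     delta_deriv [set s | T s /\ t0 <= s] x t (xD t) /\
     delta_deriv [set s | T s /\ t0 <= s] y t (yD t) /\
     delta_deriv [set s | T s /\ t0 <= s] z t (zD t)) ->
  (forall t, T t -> t0 <= t ->
     let ys := y (sigma [set s | T s /\ t0 <= s] t) in
     xD t = - (b t * x t * ys / (x t + y t)) /\
     yD t = b t * x t * ys / (x t + y t) - c t * ys /\
     zD t = c t * ys) ->
  (((forall t, T t -> b t <= c t) \/
    (forall t, T t -> x0 / (x0 + y0) * b t <= c t /\ c t <= b t)) ->
     forall t, T t -> t0 <= t -> yD t <= 0) /\
  (c t0 <= x0 / (x0 + y0) * b t0 -> 0 <= yD t0).
Proof.
move=> [hT _] Tt0 b0 c0 x00 y00 z00 pos ex ey ez dd eqs.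
set U := [set s | T s /\ t0 <= s] in dd eqs *.
have hU : closed U by have := closedI hT (@closed_ge _ t0); exact.
have Ut0 : U t0 by split.
have posU : forall t, U t -> 0 < x t /\ 0 < y t.
  by move=> t [Tt tt0]; have [? [? _]] := pos t Tt tt0.
have ysp : forall t, U t -> 0 < y (sigma U t).
  by move=> t Ut; have [_ ] := posU _ (sig_in hU Ut).
split.
- move=> hcase t Tt tt0.
  have Ut : U t by split.
  have [_ [-> _]] := eqs t Tt tt0.
  have [xt yt] := posU t Ut; have st := ysp t Ut.
  set S := y (sigma U t) in st *.
  have bt := b0 t Tt; have ct := c0 t Tt.
  have XY : 0 < x t + y t by rewrite addr_gt0.
  case: hcase => [H|H].
  + have h : b t * x t * S / (x t + y t) <= b t * S.
      rewrite ler_pdivrMr //.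
      have : 0 <= b t * S * y t by rewrite !mulr_ge0 // ltW.
      lra.
    have : 0 <= (c t - b t) * S by rewrite mulr_ge0 ?subr_ge0 ?H // ltW.
    lra.
  + have hc : forall t, T t -> c t <= b t by move=> s Ts; have [_ ->] := H s Ts.
    have key : forall s, U s -> 0 <= yD s * x s - xD s * y s.
      move=> s [Ts ts0].
      have [-> [-> _]] := eqs s Ts ts0.
      have [xs ys] := posU s (conj Ts ts0); have ss := ysp s (conj Ts ts0).
      have XYs : x s + y s != 0 by rewrite gt_eqF // addr_gt0.
      have -> : (b s * x s * y (sigma U s) / (x s + y s) - c s * y (sigma U s)) * x s -
         - (b s * x s * y (sigma U s) / (x s + y s)) * y s =
         x s * y (sigma U s) * (b s - c s) by field.
      by rewrite mulr_ge0 ?mulr_ge0 ?subr_ge0 ?hc // ltW.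
    have ge0 : forall s, U s -> t0 <= s by move=> s [].
    have I := invariant (k := y0 / x0) hU Ut0 ge0 posU
      (fun s Us => (dd s Us.1 Us.2).1) (fun s Us => (dd s Us.1 Us.2).2.1) key.
    have I0 : y0 / x0 * x t0 <= y t0 by rewrite ex ey divfK ?gt_eqF //.
    have It := I I0 t Ut.
    have It' : y0 * x t <= x0 * y t.
      move: It; rewrite mulrAC ler_pdivrMr //; lra.
    pose r := x0 / (x0 + y0).
    have hr : r * (x0 + y0) = x0 by rewrite /r divfK // gt_eqF // addr_gt0.
    have h1 : 0 <= r * (x t + y t) - x t.
      have : 0 <= (x0 + y0) * (r * (x t + y t) - x t) by nra.
      by rewrite pmulr_rge0 // addr_gt0.
    have h : b t * x t * S / (x t + y t) <= r * b t * S.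
      rewrite ler_pdivrMr //.
      have : 0 <= b t * S by rewrite mulr_ge0 // ltW.
      nra.
    have [h3 _] := H t Tt; rewrite -/r in h3.
    nra.
- move=> h.
  have [_ [-> _]] := eqs t0 Tt0 (lexx _).
  have st := ysp t0 Ut0.
  set S := y (sigma U t0) in st *.
  rewrite ex ey.
  have -> : b t0 * x0 * S / (x0 + y0) = x0 / (x0 + y0) * b t0 * S by field; rewrite gt_eqF // addr_gt0.
  nra.
Qed.
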